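(* Let $G=(V,W,E)$ be a bipartite graph with parts $V$ and $W$ such that (1) $|N(v)|=3$ for all $v\in V$, (2) $G$ is odd, (3) $G$ is rigid, and (4) there are no distinct $w_1,w_2\in W$ with $N_G^{2}(w_1)=N_G^{2}(w_2)$. Then the graph $R(G)$ is rigid.
   Context: All graphs are finite, simple and undirected; $N(v)$ denotes the neighbourhood of $v$. A graph is rigid if its only automorphism is the identity. A bipartite graph $G=(V,W,E)$ in which every vertex of $V$ has degree $3$ is called odd if for every nonempty $X\subseteq W$ there is some $v\in V$ such that $|X\cap N(v)|$ is odd. The second neighbourhood of a vertex $v$ is $N_G^{2}(v)=\{u\in V(G): u\neq v \text{ and there is } w \text{ with } \{v,w\},\{w,u\}\in E(G)\}$. The graph $R(G)$ is defined as follows: for each $w\in W$ it has two vertices $a(w),b(w)$; for each $v\in V$, with its three neighbours listed in a fixed order $w_1,w_2,w_3$, it has four vertices $m_x(v)$, $x=(x_1,x_2,x_3)\in\{0,1\}^3$ with an even number of ones, where $m_x(v)$ is adjacent to $a(w_j)$ if $x_j=0$ and to $b(w_j)$ if $x_j=1$, for $j=1,2,3$; there are no other edges. *)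

(* Defs.v *)
From mathcomp Require Import all_boot.
Set Implicit Arguments. Unset Strict Implicit. Unset Printing Implicit Defensive.

(* A finite simple graph on a finType T is given by an edge relation e : rel T
   (symmetric and irreflexive; all graphs built below are so by construction). *)

Definition is_automorphism (T : finType) (e : rel T) (f : T -> T) : Prop :=
  bijective f /\ forall x y, e (f x) (f y) = e x y.

Definition rigid (T : finType) (e : rel T) : Prop :=
  forall f, is_automorphism e f -> forall x, f x = x.

Definition nbhd (T : finType) (e : rel T) (v : T) : {set T} := [set u | e v u].
Definition nbhd2 (T : finType) (e : rel T) (v : T) : {set T} :=
  [set u | (u != v) && [exists w, e v w && e w u]].

Definition bip_rel (V W : finType) (E : V -> W -> bool) : rel (V + W) :=
  fun x y => match x, y with
             | inl v, inr w => E v w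
             | inr w, inl v => E v w
             | _, _ => false
             end.

Definition odd_bip (V W : finType) (E : V -> W -> bool) : Prop :=
  forall X : {set W}, X != set0 ->
    exists v : V, odd #|X :&: [set w | E v w]|.

Definition even_vec := {x : {ffun 'I_3 -> bool} | ~~ odd #|[set j | x j]| }.

(* Vertices of R(G):  inl (w, false) = a(w),  inl (w, true) = b(w),
   inr (v, x) = m_x(v). *)
Definition RV (V W : finType) : finType := ((W * bool) + (V * even_vec))%type.

(* nb v j is the j-th neighbour w_(j+1) of v in the fixed order.
   m_x(v) ~ a(w_j) iff x_j = 0, and m_x(v) ~ b(w_j) iff x_j = 1. *)
Definition R_adj (V W : finType) (nb : V -> 'I_3 -> W) (p : W * bool) (m : V * even_vec) : bool :=
  [exists j : 'I_3, (nb m.1 j == p.1) && (val m.2 j == p.2)].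

Definition R_rel (V W : finType) (nb : V -> 'I_3 -> W) : rel (RV V W) :=
  fun x y => match x, y with
             | inl p, inr m => R_adj nb p m
             | inr m, inl p => R_adj nb p m
             | _, _ => false
             end.

(* Main.v *)
Require Import Defs.
From mathcomp Require Import all_boot zify.
Set Implicit Arguments. Unset Strict Implicit. Unset Printing Implicit Defensive.

Lemma even_invol (T : finType) (phi : T -> T) (S : {set T}) :
  {in S, forall x, phi x \in S} -> {in S, forall x, phi (phi x) = x} ->
  {in S, forall x, phi x != x} -> ~~ odd #|S|.
Proof.
move=> Hs Hi Hn; have [n] := ubnP #|S|.
elim: n S Hs Hi Hn => // n IH S Hs Hi Hn Hlt.
case: (set_0Vmem S) => [->|[x xS]]; first by rewrite cards0.
have pxS := Hs x xS; have pxx := Hn x xS.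
have HS : #|S| = (#|S :\ x :\ phi x|).+2.
  rewrite (cardsD1 x S) xS (cardsD1 (phi x) (S :\ x)) !inE pxx pxS.
  by rewrite add1n.
rewrite HS /= negbK; apply: IH.
- move=> y; rewrite !inE => /and3P [ypx yx yS].
  rewrite Hs // andbT; apply/andP; split.
    apply/eqP => E; move/eqP: yx; apply.
    by rewrite -(Hi y yS) E (Hi x xS).
  apply/eqP => E; move/eqP: ypx; apply.
  by rewrite -E (Hi y yS).
- by move=> y; rewrite !inE => /and3P [_ _ yS]; apply: Hi.
- by move=> y; rewrite !inE => /and3P [_ _ yS]; apply: Hn.
- by move: Hlt; rewrite HS; lia.
Qed.

Definition i0 : 'I_3 := @Ordinal 3 0 isT.
Definition i1 : 'I_3 := @Ordinal 3 1 isT.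
Definition i2 : 'I_3 := @Ordinal 3 2 isT.

Lemma ord3 (j : 'I_3) : j = i0 \/ j = i1 \/ j = i2.
Proof.
case: j => [[|[|[|n]]] H].
- by left; apply: val_inj.
- by right; left; apply: val_inj.
- by right; right; apply: val_inj.
- by [].
Qed.

Definition xp (x : 'I_3 -> bool) := x i0 (+) x i1 (+) x i2.

Lemma odd_card3 (P : pred 'I_3) : odd #|[set j | P j]| = xp P.
Proof.
rewrite -sum1_card big_mkcond /= (bigD1 i0) //= (bigD1 i1) //= (bigD1 i2) //=.
rewrite big_pred0; last first.
  by move=> j; case: (ord3 j) => [->|[->|->]].
rewrite /xp !inE.
by case: (P i0); case: (P i1); case: (P i2).
Qed.

Definition mkEV (x : {ffun 'I_3 -> bool}) (H : xp x = false) : even_vec.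
Proof. exists x. by rewrite odd_card3 H. Defined.

Lemma mkEVE x H : val (@mkEV x H) = x. Proof. by []. Qed.

Lemma xp_ev (x : even_vec) : xp (val x) = false.
Proof. case: x => x /= H. by move: H; rewrite odd_card3 => /negbTE. Qed.

Definition flipf (j : 'I_3) (x : {ffun 'I_3 -> bool}) : {ffun 'I_3 -> bool} :=
  [ffun k => if k == j then x k else ~~ x k].

Lemma xp_flip j x : xp (flipf j x) = xp x.
Proof.
rewrite /xp !ffunE.
by case: (ord3 j) => [->|[->|->]]; case: (x i0); case: (x i1); case: (x i2).
Qed.

Definition flip j (x : even_vec) : even_vec :=
  @mkEV (flipf j (val x)) (etrans (xp_flip j (val x)) (xp_ev x)).

Lemma flipK j x : flip j (flip j x) = x.
Proof.
apply: val_inj; apply/ffunP => k; rewrite /= !ffunE.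
by case: (k == j) => //; rewrite negbK.
Qed.

Lemma flip_neq j x : flip j x != x.
Proof.
apply/eqP => /(congr1 (fun y : even_vec => val y (if j == i0 then i1 else i0))).
rewrite /= ffunE.
by case: (ord3 j) => [->|[->|->]] /=; case: (val x _).
Qed.

Lemma flip_at j x : val (flip j x) j = val x j.
Proof. by rewrite /= ffunE eqxx. Qed.

Definition mkf (j k : 'I_3) (c d : bool) : {ffun 'I_3 -> bool} :=
  [ffun i => if i == j then c else if i == k then d else c (+) d].

Lemma xp_mkf j k c d : j != k -> xp (mkf j k c d) = false.
Proof.
rewrite /xp !ffunE.
by case: (ord3 j) => [->|[->|->]]; case: (ord3 k) => [->|[->|->]] //= _;
  case: c; case: d.
Qed.

Section Comb.
Variables (V W : finType) (E : V -> W -> bool) (nb : V -> 'I_3 -> W).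
Hypothesis hnb : forall v : V, injective (nb v) /\ [set nb v j | j : 'I_3] = [set w | E v w].

Lemma nb_inj v : injective (nb v). Proof. by case: (hnb v). Qed.

Lemma EP v w : E v w = [exists j, nb v j == w].
Proof.
case: (hnb v) => _ /setP /(_ w); rewrite inE => <-.
apply/imsetP/existsP => [[j _ ->]|[j /eqP <-]]; first by exists j.
by exists j.
Qed.

Lemma E_nb v j : E v (nb v j).
Proof. by rewrite EP; apply/existsP; exists j. Qed.

Lemma card_N v : #|[set w | E v w]| = 3.
Proof.
case: (hnb v) => inj <-; rewrite card_imset //.
by rewrite card_ord.
Qed.

Local Notation e := (R_rel nb).

Lemma R_adjE w c v x : R_adj nb (w, c) (v, x) = [exists j, (nb v j == w) && (val x j == c)].
Proof. by []. Qed.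

Lemma nbhdM v x : nbhd e (inr (v, x)) = [set inl (nb v j, val x j) | j : 'I_3].
Proof.
apply/setP => [[[w c]|m]]; rewrite !inE /=.
  apply/existsP/imsetP => [[j /andP [/eqP Hj /eqP Hc]]|[j _ [-> ->]]].
    by exists j => //; rewrite /= in Hj Hc; rewrite Hj Hc.
  by exists j; rewrite !eqxx.
by apply/esym/imsetP => [[j _]].
Qed.

Lemma degM v x : #|nbhd e (inr (v, x))| = 3.
Proof.
rewrite nbhdM card_imset ?card_ord //.
by move=> j k [/nb_inj].
Qed.

Definition jidx v w : 'I_3 := odflt i0 [pick j | nb v j == w].

Lemma jidxP v j : jidx v (nb v j) = j.
Proof.
rewrite /jidx; case: pickP => [k /eqP /nb_inj //|/(_ j)].
by rewrite eqxx.
Qed.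

Lemma degA w c : ~~ odd #|nbhd e (inl (w, c))|.
Proof.
pose phi (z : RV V W) := match z with
  | inr (v, x) => inr (v, flip (jidx v w) x) | inl q => inl q end.
apply: (@even_invol _ phi).
- move=> [q|[v x]]; rewrite !inE //= => /existsP [j /andP [/eqP Hj /eqP Hc]].
  rewrite /= in Hj Hc; apply/existsP; exists j; rewrite -Hj jidxP flip_at Hc !eqxx //.
- move=> [q|[v x]]; rewrite !inE //= => _.
  by rewrite flipK.
- move=> [q|[v x]]; rewrite !inE //= => _.
  apply/eqP => [[]]; apply/eqP; exact: flip_neq.
Qed.

End Comb.

Section Comb2.
Variables (V W : finType) (E : V -> W -> bool) (nb : V -> 'I_3 -> W).
Hypothesis hnb : forall v : V, injective (nb v) /\ [set nb v j | j : 'I_3] = [set w | E v w].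
Local Notation e := (R_rel nb).

Lemma N2G_inl v w : (inl v \in nbhd2 (bip_rel E) (inr w)) = false.
Proof.
rewrite inE; apply/negbTE; rewrite negb_and; apply/orP; right.
by apply/existsP => [[[z|z] /andP []]].
Qed.

Lemma N2G_inr u w : (inr u \in nbhd2 (bip_rel E) (inr w)) = (u != w) && [exists v, E v w && E v u].
Proof.
rewrite inE; congr andb.
apply/existsP/existsP => [[[z|z] //= H]|[v H]]; first by exists z.
by exists (inl v).
Qed.

Lemma N2R_inr m w c : (inr m \in nbhd2 e (inl (w, c))) = false.
Proof.
rewrite inE; apply/negbTE; rewrite negb_and; apply/orP; right.
by apply/existsP => [[[z|z] /andP []]].
Qed.

Lemma N2R_inl u d w c : (inl (u, d) \in nbhd2 e (inl (w, c))) = (u != w) && [exists v, E v w && E v u].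
Proof.
rewrite inE; apply/andP/andP => [[H1 /existsP [[z|[v x]] //= /andP [H2 H3]]]|[H1 /existsP [v /andP [H2 H3]]]].
  move: H2 H3 => /existsP [j /andP [/eqP Hj /eqP Hc]] /existsP [k /andP [/eqP Hk /eqP Hd]].
  rewrite /= in Hj Hc Hk Hd.
  have Evw : E v w by rewrite -Hj E_nb.
  have Evu : E v u by rewrite -Hk E_nb.
  split; last by apply/existsP; exists v; rewrite Evw Evu.
  apply/eqP => Euw; move/eqP: H1; apply.
  have jk : j = k by apply: (@nb_inj _ _ _ _ hnb v); rewrite Hj Hk.
  by rewrite Euw -Hc -Hd jk.
move: H2 H3; rewrite !(EP hnb) => /existsP [j /eqP Hj] /existsP [k /eqP Hk].
have jk : j != k by apply: contra H1 => /eqP jk; rewrite -Hk -jk Hj.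
split; first by apply: contra H1 => /eqP [->].
apply/existsP; exists (inr (v, @mkEV (mkf j k c d) (xp_mkf c d jk))).
apply/andP; split; apply/existsP.
  by exists j; rewrite /= ffunE eqxx Hj !eqxx.
have kj : (k == j) = false by rewrite eq_sym (negbTE jk).
by exists k; rewrite /= ffunE kj eqxx Hk !eqxx.
Qed.

Lemma N2R_same w c c' : nbhd2 e (inl (w, c)) = nbhd2 e (inl (w, c')).
Proof. by apply/setP => [[[u d]|m]]; rewrite ?N2R_inl ?N2R_inr. Qed.

Hypothesis h4 : forall w1 w2 : W, w1 != w2 ->
     nbhd2 (bip_rel E) (inr w1) != nbhd2 (bip_rel E) (inr w2).

Lemma N2R_inj w1 w2 c1 c2 : nbhd2 e (inl (w1, c1)) = nbhd2 e (inl (w2, c2)) -> w1 = w2.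
Proof.
move=> H; apply/eqP/negPn/negP => ne; move/eqP: (h4 ne); apply; apply/setP.
move=> [v|u]; first by rewrite !N2G_inl.
by rewrite !N2G_inr -(N2R_inl u false w1 c1) -(N2R_inl u false w2 c2) H.
Qed.

Hypothesis hrig : rigid (bip_rel E).

Lemma N_inj v1 v2 : [set w | E v1 w] = [set w | E v2 w] -> v1 = v2.
Proof.
move=> H.
have HE : forall w, E v1 w = E v2 w by move=> w; move/setP: H => /(_ w); rewrite !inE.
pose sv v := if v == v1 then v2 else if v == v2 then v1 else v.
have svK : involutive sv.
  move=> v; rewrite /sv.
  case: (eqVneq v v1) => [->|n1]; first by rewrite eqxx; case: eqVneq.
  case: (eqVneq v v2) => [->|n2]; first by rewrite eqxx.
  by rewrite (negbTE n1) (negbTE n2).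
have svE : forall v w, E (sv v) w = E v w.
  move=> v w; rewrite /sv.
  case: (eqVneq v v1) => [->|n1]; first by rewrite HE.
  by case: (eqVneq v v2) => [->|n2].
pose s (z : V + W) := match z with inl v => inl (sv v) | inr w => inr w end.
have : s (inl v1) = inl v1.
  apply: hrig; split.
    by exists s => [[v|w]|[v|w]] //=; rewrite svK.
  by move=> [v|w] [v'|w'] //=; rewrite svE.
by rewrite /= /sv eqxx => [[]].
Qed.

End Comb2.

Section Auto.
Variables (V W : finType) (E : V -> W -> bool) (nb : V -> 'I_3 -> W).
Hypothesis hnb : forall v : V, injective (nb v) /\ [set nb v j | j : 'I_3] = [set w | E v w].
Local Notation e := (R_rel nb).
Variable f : RV V W -> RV V W.
Hypothesis hfb : bijective f.
Hypothesis hfe : forall x y, e (f x) (f y) = e x y.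

Let finj : injective f := bij_inj hfb.

Lemma nbhd_f z : nbhd e (f z) = f @: nbhd e z.
Proof.
case: hfb => g fK gK.
by apply/setP => u; rewrite -[u]gK mem_imset // !inE hfe.
Qed.

Lemma deg_f z : #|nbhd e (f z)| = #|nbhd e z|.
Proof. by rewrite nbhd_f card_imset. Qed.

Lemma nbhd2_f u z : (f u \in nbhd2 e (f z)) = (u \in nbhd2 e z).
Proof.
case: hfb => g fK gK.
rewrite !inE (inj_eq finj); congr andb.
apply/existsP/existsP => [[y]|[y]]; last by exists (f y); rewrite !hfe.
by rewrite -[y]gK !hfe => H; exists (g y).
Qed.

Lemma N2f z1 z2 : nbhd2 e z1 = nbhd2 e z2 -> nbhd2 e (f z1) = nbhd2 e (f z2).
Proof.
case: hfb => g fK gK => H; apply/setP => u.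
by rewrite -[u]gK !nbhd2_f H.
Qed.

Lemma N2f' z1 z2 : nbhd2 e (f z1) = nbhd2 e (f z2) -> nbhd2 e z1 = nbhd2 e z2.
Proof. by move=> H; apply/setP => u; rewrite -!(nbhd2_f u) H. Qed.

Definition fl p := match f (inl p) with inl q => q | inr _ => p end.
Definition fr m := match f (inr m) with inr m' => m' | inl _ => m end.

Lemma f_inl p : f (inl p) = inl (fl p).
Proof.
rewrite /fl; case Hf: (f (inl p)) => [q|[v x]] //.
have := deg_f (inl p); rewrite Hf (degM hnb) => H.
by have := degA hnb p.1 p.2; rewrite -surjective_pairing -H.
Qed.

Lemma f_inr m : f (inr m) = inr (fr m).
Proof.
rewrite /fr; case Hf: (f (inr m)) => [[w c]|m'] //.
have := deg_f (inr m); rewrite Hf => H.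
have := degA hnb w c; rewrite H.
by case: m {Hf H} => v x; rewrite (degM hnb).
Qed.


Hypothesis h4 : forall w1 w2 : W, w1 != w2 ->
     nbhd2 (bip_rel E) (inr w1) != nbhd2 (bip_rel E) (inr w2).

Definition g w := (fl (w, false)).1.
Definition h w := (fl (w, false)).2.

Lemma f_A w c : f (inl (w, c)) = inl (g w, c (+) h w).
Proof.
rewrite f_inl /g /h; case: c; last by rewrite /= -surjective_pairing.
case Ht: (fl (w, true)) => [u d].
have H : nbhd2 e (inl (u, d)) = nbhd2 e (inl (fl (w, false))).
  by rewrite -Ht -!f_inl; apply: N2f; exact: (N2R_same hnb).
move: H; case Hf: (fl (w, false)) => [u' d'] /= H.
have uu : u = u' by apply: (N2R_inj hnb h4 H).
subst u'; congr (inl (_, _)).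
have : fl (w, true) != fl (w, false).
  apply/eqP => E1; have : f (inl (w, true)) = f (inl (w, false)) by rewrite !f_inl E1.
  by move/finj.
rewrite Ht Hf; clear Ht Hf H; by case: d; case: d'; rewrite ?eqxx.
Qed.

Lemma g_inj : injective g.
Proof.
move=> w1 w2 H.
apply: (N2R_inj hnb h4 (c1 := false) (c2 := false)).
apply: N2f'; rewrite !f_A H; exact: (N2R_same hnb).
Qed.

Lemma adj_M v (x : even_vec) j : e (inl (nb v j, val x j)) (inr (v, x)).
Proof. by apply/existsP; exists j; rewrite !eqxx. Qed.

Lemma adjf v (x : even_vec) j : exists k, nb (fr (v, x)).1 k = g (nb v j) /\
   val (fr (v, x)).2 k = addb (val x j) (h (nb v j)).
Proof.
have := hfe (inl (nb v j, val x j)) (inr (v, x)).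
rewrite adj_M f_A f_inr.
case: (fr (v, x)) => v' y /= /existsP [k /andP [/eqP H1 /eqP H2]].
by exists k.
Qed.

Lemma N_fr v (x : even_vec) : [set w | E (fr (v, x)).1 w] = g @: [set w | E v w].
Proof.
apply/esym/eqP; rewrite eqEcard (card_N hnb) card_imset ?(card_N hnb) ?g_inj //.
rewrite leqnn andbT; apply/subsetP => w' /imsetP [w]; rewrite inE (EP hnb).
move=> /existsP [j /eqP <-] ->; rewrite inE.
have [k [<- _]] := adjf v x j.
exact: (E_nb hnb).
exact: g_inj.
Qed.

End Auto.

Lemma xp0 : xp [ffun _ : 'I_3 => false] = false.
Proof. by rewrite /xp !ffunE. Qed.
Definition x0 : even_vec := mkEV xp0.

Section Main.
Variables (V W : finType) (E : V -> W -> bool) (nb : V -> 'I_3 -> W).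
Hypothesis hnb : forall v : V, injective (nb v) /\ [set nb v j | j : 'I_3] = [set w | E v w].
Local Notation e := (R_rel nb).
Variable f : RV V W -> RV V W.
Hypothesis hfb : bijective f.
Hypothesis hfe : forall x y, e (f x) (f y) = e x y.
Hypothesis h4 : forall w1 w2 : W, w1 != w2 ->
     nbhd2 (bip_rel E) (inr w1) != nbhd2 (bip_rel E) (inr w2).
Hypothesis hrig : rigid (bip_rel E).
Hypothesis hodd : odd_bip E.

Local Notation g := (g f).
Local Notation h := (h f).
Local Notation fr := (fr f).

Let g_inj := g_inj hnb hfb hfe h4.
Let N_fr := N_fr hnb hfb hfe h4.
Let adjf := adjf hnb hfb hfe h4.

Definition gv v := (fr (v, x0)).1.

Lemma E_gv v w : E (gv v) (g w) = E v w.
Proof.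
have := N_fr v x0 => /setP /(_ (g w)); rewrite inE mem_imset ?inE //.
Qed.

Lemma gv_inj : injective gv.
Proof.
move=> v1 v2 H; apply: (N_inj hrig).
apply: (imset_inj g_inj); rewrite -(N_fr v1 x0) -(N_fr v2 x0).
by rewrite -/(gv v1) -/(gv v2) H.
Qed.

Lemma g_gv_id : (forall w, g w = w) /\ (forall v, gv v = v).
Proof.
pose phi (z : V + W) := match z with inl v => inl (gv v) | inr w => inr (g w) end.
have Hphi : forall z, phi z = z.
  apply: hrig; split.
    apply: injF_bij => [[v|w] [v'|w']] //= [] H.
      by rewrite (gv_inj H).
    by rewrite (g_inj H).
  by move=> [v|w] [v'|w'] //=; rewrite E_gv.
split.
  by move=> w; have := Hphi (inr w) => [[]].
by move=> v; have := Hphi (inl v) => [[]].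
Qed.

Lemma fr1 v x : (fr (v, x)).1 = v.
Proof.
apply: (N_inj hrig); rewrite N_fr.
by rewrite (eq_imset _ g_gv_id.1) imset_id.
Qed.

Lemma h_even v : ~~ odd #|[set w | h w] :&: [set w | E v w]|.
Proof.
have Hy : forall j, val (fr (v, x0)).2 j = h (nb v j).
  move=> j; have [k [H1 H2]] := adjf v x0 j.
  move: H1 H2; rewrite fr1 g_gv_id.1 => /(nb_inj hnb) -> ->.
  by rewrite /= ffunE.
have -> : [set w | h w] :&: [set w | E v w] = nb v @: [set j | h (nb v j)].
  apply/setP => w; rewrite !inE (EP hnb).
  apply/andP/imsetP => [[hw /existsP [j /eqP Hj]]|[j]].
    by exists j; rewrite // inE Hj.
  rewrite inE => hj ->; split => //; by apply/existsP; exists j.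
rewrite card_imset; last exact: (nb_inj hnb).
rewrite (odd_card3 (fun j => h (nb v j))) /xp -!Hy.
by rewrite -/(xp (val (fr (v, x0)).2)) xp_ev.
Qed.

Lemma h_false w : h w = false.
Proof.
have : [set w | h w] = set0.
  apply/eqP/negPn/negP => ne.
  have [v Hv] := hodd ne.
  by move: (h_even v); rewrite Hv.
by move/setP/(_ w); rewrite !inE.
Qed.

Lemma f_id z : f z = z.
Proof.
case: z => [[w c]|[v x]].
  by rewrite (f_A hnb hfb hfe h4) g_gv_id.1 h_false addbF.
rewrite (f_inr hnb hfb hfe).
have H1 := fr1 v x.
case Hr: (fr (v, x)) H1 => [v' y] /= H1; subst v'; congr (inr (_, _)).
apply: val_inj; apply/ffunP => j.
have [k [K1 K2]] := adjf v x j.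
move: K1 K2; rewrite Hr /= g_gv_id.1 => /(nb_inj hnb) -> ->.
by rewrite h_false addbF.
Qed.

End Main.

Theorem mainTheorem2 (V W : finType) (E : V -> W -> bool) (nb : V -> 'I_3 -> W) :
  (* (1) every v in V has exactly three neighbours *)
  (forall v : V, #|nbhd (bip_rel E) (inl v)| = 3) ->
  (* (2) G is odd *)
  odd_bip E ->
  (* (3) G is rigid *)
  rigid (bip_rel E) ->
  (* (4) distinct vertices of W have distinct second neighbourhoods *)
  (forall w1 w2 : W, w1 != w2 ->
     nbhd2 (bip_rel E) (inr w1) != nbhd2 (bip_rel E) (inr w2)) ->
  (* nb v lists the three neighbours of v in a fixed order *)
  (forall v : V, injective (nb v) /\ [set nb v j | j : 'I_3] = [set w | E v w]) ->
  rigid (R_rel nb).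
Proof.
move=> _ hodd hrig h4 hnb f [hfb hfe] z.
exact: (f_id hnb hfb hfe h4 hrig hodd).
Qed.
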